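(* Let $a_1,\dots,a_n\in S^d$. Algorithm 2.6 (described in the context) terminates after finitely many steps, for feasible as well as infeasible instances. It terminates either in step 2 with a point $x^k/\|x^k\|\in S^d$ satisfying $a_i^Tx^k\ge0$ for all $i$, or in step 3 with a positively spanning subset of $\{a_1,\dots,a_n\}$. In this sense it solves the spherical feasibility problem: find $x\in S^d$ with $a_i^Tx\ge0$ for all $i$, or show none exists.
   Context: $S^d$ is the unit sphere in $\mathbb{R}^{d+1}$ and $O$ is the origin. For $x\in S^d$, an index $m$ is a most violated constraint if $a_m^Tx=\min_j a_j^Tx$. A finite set $Q$ is positively spanning if it is affinely independent and $O\in\mathrm{conv}\,Q$. The touching sphere of an affinely independent $Q$ is the unique sphere $\{z:\|z-C\|=R\}$ with $C\in\mathrm{aff}\,Q$ containing $Q$. Algorithm 2.6: (1) Choose any $j$ and set $k=1$, $x^1=a_j$, $Q_1=\{a_j\}$. (2) If $x^k/\|x^k\|$ is feasible, stop. Otherwise let $m$ be the index of a most violated constraint for $x^k/\|x^k\|$, and set $y=x^k$. (3) If $Q_k\cup\{a_m\}$ is positively spanning, stop. (4) Compute the center $C$ of the touching sphere of $Q_k\cup\{a_m\}$. (5) If $C\in\mathrm{conv}(Q_k\cup\{a_m\})$, set $x^{k+1}=C$, $Q_{k+1}=Q_k\cup\{a_m\}$ and $k:=k+1$, then go to (2). (6) Otherwise, let $y$ be the point where the segment $\overline{yC}$ meets the relative boundary of $\mathrm{conv}(Q_k\cup\{a_m\})$. Let $F$ be a facet of $\mathrm{conv}(Q_k\cup\{a_m\})$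 containing $y$, and let $a_j$ be the vertex of $Q_k$ not contained in $F$. Set $Q_k:=Q_k\setminus\{a_j\}$ and go to (4). *)

(* Defs.v *)
(* Vectors of R^{d+1} are row vectors 'rV[R]_d.+1 over a
   real closed field R (so that square roots / norms exist). *)
From HB Require Import structures.
From mathcomp Require Import all_boot all_order all_algebra.
Set Implicit Arguments. Unset Strict Implicit. Unset Printing Implicit Defensive.
Import Order.TTheory GRing.Theory Num.Theory.
Local Open Scope ring_scope.

Section Defs.
Variables (R : rcfType) (d n : nat).
Local Notation vec := 'rV[R]_d.+1.

Definition dot (u v : vec) : R := \sum_(i < d.+1) u 0 i * v 0 i.
Definition vnorm (u : vec) : R := Num.sqrt (dot u u).

Variable a : 'I_n -> vec.

Definition feasible (x : vec) : Prop := forall i, 0 <= dot (a i) x.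

Definition most_violated (x : vec) (m : 'I_n) : Prop :=
  forall j, dot (a m) x <= dot (a j) x.

(* Point sets are given as index sets Q; the points are the a_i, i in Q. *)
Definition affinely_independent (Q : {set 'I_n}) : Prop :=
  forall c : 'I_n -> R, \sum_(i in Q) c i = 0 ->
    \sum_(i in Q) c i *: a i = 0 -> forall i, i \in Q -> c i = 0.

Definition in_aff (Q : {set 'I_n}) (z : vec) : Prop :=
  exists c : 'I_n -> R, \sum_(i in Q) c i = 1 /\ z = \sum_(i in Q) c i *: a i.

Definition in_conv (Q : {set 'I_n}) (z : vec) : Prop :=
  exists c : 'I_n -> R, (forall i, i \in Q -> 0 <= c i) /\
    \sum_(i in Q) c i = 1 /\ z = \sum_(i in Q) c i *: a i.

Definition positively_spanning (Q : {set 'I_n}) : Prop :=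
  affinely_independent Q /\ in_conv Q 0.

Definition touching_center (Q : {set 'I_n}) (C : vec) : Prop :=
  in_aff Q C /\ exists rho : R, forall i, i \in Q -> vnorm (a i - C) = rho.

(* relative interior / relative boundary of conv Q (aff (conv Q) = aff Q;
   conv Q is closed, so its relative boundary is conv Q minus its relative
   interior) *)
Definition in_rel_interior_conv (Q : {set 'I_n}) (z : vec) : Prop :=
  in_conv Q z /\ exists eps : R, 0 < eps /\
    forall w, in_aff Q w -> vnorm (w - z) < eps -> in_conv Q w.

Definition in_rel_boundary_conv (Q : {set 'I_n}) (z : vec) : Prop :=
  in_conv Q z /\ ~ in_rel_interior_conv Q z.

(* y' is the point where the segment [y, C] meets the relative boundary of
   conv Q (the meeting point closest to C, i.e. where the segment leaves
   conv Q). *)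
Definition segment_exit (Q : {set 'I_n}) (y C y' : vec) : Prop :=
  exists t : R, 0 <= t <= 1 /\ y' = y + t *: (C - y) /\
    in_rel_boundary_conv Q y' /\
    forall s : R, t < s <= 1 -> ~ in_rel_boundary_conv Q (y + s *: (C - y)).

(* facets of the simplex conv P (P affinely independent) are conv F with
   F = P minus one vertex *)
Definition simplex_facet (P F : {set 'I_n}) : Prop :=
  exists2 v, v \in P & F = P :\ v.

Inductive alg_state : Type :=
  | AtStep2 of vec & {set 'I_n}          (* x^k, Q_k *)
  | AtStep4 of {set 'I_n} & 'I_n & vec   (* Q_k, m, y *)
  | Stop2 of vec                         (* stopped in step 2 with x^k *)
  | Stop3 of {set 'I_n}.                 (* stopped in step 3 with Q_k u {a_m} *)

Definition normalize (x : vec) : vec := (vnorm x)^-1 *: x.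

(* One transition of Algorithm 2.6 (all admissible choices allowed) *)
Inductive alg_step : alg_state -> alg_state -> Prop :=
  | step2_stop x Q :
      feasible (normalize x) -> alg_step (AtStep2 x Q) (Stop2 x)
  | step3_stop x Q m :
      ~ feasible (normalize x) -> most_violated (normalize x) m ->
      positively_spanning (m |: Q) ->
      alg_step (AtStep2 x Q) (Stop3 (m |: Q))
  | step3_continue x Q m :
      ~ feasible (normalize x) -> most_violated (normalize x) m ->
      ~ positively_spanning (m |: Q) ->
      alg_step (AtStep2 x Q) (AtStep4 Q m x)
  | step5 Q m y C :
      touching_center (m |: Q) C -> in_conv (m |: Q) C ->
      alg_step (AtStep4 Q m y) (AtStep2 C (m |: Q))
  | step6 Q m y C y' F j :
      touching_center (m |: Q) C -> ~ in_conv (m |: Q) C ->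
      segment_exit (m |: Q) y C y' ->
      simplex_facet (m |: Q) F -> in_conv F y' ->
      j \in Q -> j \notin F ->
      alg_step (AtStep4 Q m y) (AtStep4 (Q :\ j) m y').

End Defs.

Arguments AtStep2 {R d n}.
Arguments AtStep4 {R d n}.
Arguments Stop2 {R d n}.
Arguments Stop3 {R d n}.

(* Main.v *)
Require Import Defs.
From HB Require Import structures.
From mathcomp Require Import all_boot all_order all_algebra.
From mathcomp Require Import ring lra.
From Stdlib Require Import Relations ClassicalEpsilon Classical.
Set Implicit Arguments. Unset Strict Implicit. Unset Printing Implicit Defensive.
Import Order.TTheory GRing.Theory Num.Theory.
Local Open Scope ring_scope.

Section G.
Variables (R : rcfType) (d : nat).
Local Notation vec := 'rV[R]_d.+1.
Local Notation dot := (@dot R d).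

Lemma dotC u v : dot u v = dot v u.
Proof. by apply: eq_bigr => i _; rewrite mulrC. Qed.
Lemma dotDl u v w : dot (u + v) w = dot u w + dot v w.
Proof. by rewrite /Defs.dot -big_split; apply: eq_bigr => i _; rewrite mxE mulrDl. Qed.
Lemma dotZl k u w : dot (k *: u) w = k * dot u w.
Proof. by rewrite /Defs.dot mulr_sumr; apply: eq_bigr => i _; rewrite mxE mulrA. Qed.
Lemma dotNl u w : dot (- u) w = - dot u w.
Proof. by rewrite -scaleN1r dotZl mulN1r. Qed.
Lemma dotBl u v w : dot (u - v) w = dot u w - dot v w.
Proof. by rewrite dotDl dotNl. Qed.
Lemma dotDr u v w : dot w (u + v) = dot w u + dot w v.
Proof. by rewrite dotC dotDl !(dotC w). Qed.
Lemma dotZr k u w : dot w (k *: u) = k * dot w u.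
Proof. by rewrite dotC dotZl dotC. Qed.
Lemma dotNr u w : dot w (- u) = - dot w u.
Proof. by rewrite dotC dotNl dotC. Qed.
Lemma dotBr u v w : dot w (u - v) = dot w u - dot w v.
Proof. by rewrite dotDr dotNr. Qed.
Lemma dot0l w : dot 0 w = 0.
Proof. by rewrite -(scale0r 0) dotZl mul0r. Qed.
Lemma dot0r w : dot w 0 = 0.
Proof. by rewrite dotC dot0l. Qed.
Lemma dot_suml (I : finType) (P : pred I) (F : I -> vec) w :
  dot (\sum_(i | P i) F i) w = \sum_(i | P i) dot (F i) w.
Proof.
rewrite /Defs.dot exchange_big /=; apply: eq_bigr => k _.
by rewrite summxE mulr_suml.
Qed.
Lemma dot_ge0 u : 0 <= dot u u.
Proof. by apply: sumr_ge0 => i _; rewrite -expr2 sqr_ge0. Qed.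
Lemma dot_eq0 u : dot u u = 0 -> u = 0.
Proof.
move=> h; apply/rowP => k; rewrite mxE.
have E : \sum_(i < d.+1) u 0 i ^+ 2 = dot u u.
  by rewrite /Defs.dot; apply: eq_bigr => i _; rewrite expr2.
move: h; rewrite -E => /psumr_eq0P H.
by apply/eqP; rewrite -sqrf_eq0; apply/eqP; apply: H => // i _; apply: sqr_ge0.
Qed.
End G.

Section A.
Variables (R : rcfType) (d n : nat) (a : 'I_n -> 'rV[R]_d.+1).
Local Notation vec := 'rV[R]_d.+1.
Local Notation dot := (@dot R d).

Lemma sum_ext (V : zmodType) (P' P : {set 'I_n}) (F : 'I_n -> V) :
  P' \subset P -> \sum_(i in P) (if i \in P' then F i else 0) = \sum_(i in P') F i.
Proof.
move=> sub; rewrite -big_mkcondr /=; apply: eq_bigl => i.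
by apply/andb_idl => /(subsetP sub).
Qed.

Lemma sum_ext_scale (P' P : {set 'I_n}) (c : 'I_n -> R) :
  P' \subset P -> \sum_(i in P) (if i \in P' then c i else 0) *: a i =
                  \sum_(i in P') c i *: a i.
Proof.
move=> sub; rewrite -(sum_ext (fun i => c i *: a i) sub).
by apply: eq_bigr => i _; case: ifP; rewrite ?scale0r.
Qed.

Lemma in_conv_sub (P' P : {set 'I_n}) z : P' \subset P -> in_conv a P' z -> in_conv a P z.
Proof.
move=> sub [c [c0 [c1 cz]]].
exists (fun i => if i \in P' then c i else 0); split; last split.
- by move=> i _; case: ifP => // /c0.
- by rewrite sum_ext.
- by rewrite sum_ext_scale.
Qed.

Lemma in_aff_sub (P' P : {set 'I_n}) z : P' \subset P -> in_aff a P' z -> in_aff a P z.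
Proof.
move=> sub [c [c1 cz]].
exists (fun i => if i \in P' then c i else 0); split.
- by rewrite sum_ext.
- by rewrite sum_ext_scale.
Qed.

Lemma conv_aff (P : {set 'I_n}) z : in_conv a P z -> in_aff a P z.
Proof. by move=> [c [_ h]]; exists c. Qed.

Lemma aff_indep_sub (P' P : {set 'I_n}) : P' \subset P -> affinely_independent a P ->
  affinely_independent a P'.
Proof.
move=> sub hP c c0 ca i iP'.
have := hP (fun i => if i \in P' then c i else 0).
rewrite sum_ext // sum_ext_scale // => /(_ c0 ca i (subsetP sub _ iP')).
by rewrite iP'.
Qed.

Lemma coef_uniq (P : {set 'I_n}) (g h : 'I_n -> R) : affinely_independent a P ->
  \sum_(i in P) g i = \sum_(i in P) h i ->
  \sum_(i in P) g i *: a i = \sum_(i in P) h i *: a i ->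
  forall i, i \in P -> g i = h i.
Proof.
move=> hP e1 e2 i iP; apply/eqP; rewrite -subr_eq0; apply/eqP.
apply: (hP (fun i => g i - h i)) => //.
  by rewrite sumrB e1 subrr.
rewrite (eq_bigr (fun i => g i *: a i - h i *: a i)).
  by rewrite sumrB e2 subrr.
by move=> j _; rewrite scalerBl.
Qed.

Lemma not_conv (P : {set 'I_n}) (g : 'I_n -> R) z i : affinely_independent a P ->
  \sum_(i in P) g i = 1 -> z = \sum_(i in P) g i *: a i -> i \in P -> g i < 0 ->
  ~ in_conv a P z.
Proof.
move=> hP g1 gz iP gi [c [c0 [c1 cz]]].
have E : g i = c i.
  by apply: (coef_uniq hP) => //; rewrite ?g1 ?c1 // -gz -cz.
by move: (c0 i iP); rewrite -E leNgt gi.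
Qed.

Lemma dot_aff (P : {set 'I_n}) z w k : in_aff a P z -> (forall i, i \in P -> dot (a i) w = k) ->
  dot z w = k.
Proof.
move=> [c [c1 ->]] h; rewrite dot_suml.
rewrite (eq_bigr (fun i => c i * k)); first by rewrite -mulr_suml c1 mul1r.
by move=> i iP; rewrite dotZl h.
Qed.

Definition minnorm (P : {set 'I_n}) z := in_aff a P z /\ forall i, i \in P -> dot (a i) z = dot z z.

Lemma minnorm_dot (P : {set 'I_n}) C y : minnorm P C -> in_aff a P y -> dot y C = dot C C.
Proof. by move=> [_ h] hy; apply: dot_aff hy h. Qed.

Lemma dot_sub u v : dot (u - v) (u - v) = dot u u - 2 * dot u v + dot v v.
Proof. rewrite !dotBl !dotBr (dotC v u); ring. Qed.

Lemma minnorm_uniq (P : {set 'I_n}) z z' : minnorm P z -> minnorm P z' -> z = z'.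
Proof.
move=> hz hz'; have e1 := minnorm_dot hz (proj1 hz').
have e2 := minnorm_dot hz' (proj1 hz).
apply/eqP; rewrite -subr_eq0; apply/eqP; apply: dot_eq0.
have e3 : dot z z = dot z' z' by rewrite -e1 dotC e2.
rewrite dot_sub e2 e3; ring.
Qed.


Lemma proj_exists k : forall P : {set 'I_n}, #|P| = k.+1 -> forall w : vec,
  exists z, in_aff a P z /\ forall i, i \in P -> dot (a i - z) (w - z) = 0.
Proof.
elim: k => [|k IH] P hP w.
  have /cards1P [v ->] : #|P| == 1%N by rewrite hP.
  exists (a v); split.
    by exists (fun _ => 1); rewrite !big_set1 scale1r.
  by move=> i; rewrite inE => /eqP ->; rewrite subrr dot0l.
have [v Pv] : exists v, v \in P by apply/set0Pn; rewrite -card_gt0 hP.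
set P' := P :\ v.
have hP' : #|P'| = k.+1 by move: hP; rewrite (cardsD1 v) Pv => -[].
have subP : P' \subset P by apply: subsetDl.
have [zw [[cw [cw1 zwE]] Fw]] := IH P' hP' w.
have [zv [[cv [cv1 zvE]] Fv]] := IH P' hP' (a v).
have [u hu] : exists u, u = a v - zv by eexists.
have F1 : forall i, i \in P' -> dot (a i) (w - zw) = dot zw (w - zw).
  by move=> i /Fw; rewrite dotBl => /eqP; rewrite subr_eq0 => /eqP.
have F2 : forall i, i \in P' -> dot (a i) u = dot zv u.
  by move=> i /Fv; rewrite -hu dotBl => /eqP; rewrite subr_eq0 => /eqP.
have affw : in_aff a P' zw by exists cw.
have affv : in_aff a P' zv by exists cv.
have G1 : dot zw u = dot zv u by apply: dot_aff affw F2.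
have G2 : dot zv (w - zw) = dot zw (w - zw) by apply: dot_aff affv F1.
have hav : a v = zv + u by rewrite hu addrC subrK.
have [u0|un0] := eqVneq (dot u u) 0.
  have u0' := dot_eq0 u0.
  exists zw; split; first exact: in_aff_sub affw.
  move=> i iP; have [->|iv] := eqVneq i v.
    by rewrite hav u0' addr0 dotBl G2 subrr.
  by apply: Fw; rewrite in_setD1 iv.
pose s := dot u (w - zw) / dot u u.
have hs : dot u (w - zw) = s * dot u u by rewrite /s mulfVK.
exists (zw + s *: u); split.
  exists (fun i => if i == v then s else cw i - s * cv i); split.
    rewrite (big_setD1 v Pv) /= eqxx.
    rewrite (eq_bigr (fun i => cw i - s * cv i)); last first.
      by move=> i; rewrite in_setD1 => /andP [/negbTE -> _].
    by rewrite sumrB -mulr_sumr cw1 cv1; ring.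
  rewrite (big_setD1 v Pv) /= eqxx.
  rewrite (eq_bigr (fun i => cw i *: a i - s *: (cv i *: a i))); last first.
    by move=> i; rewrite in_setD1 => /andP [/negbTE -> _]; rewrite scalerBl scalerA.
  rewrite sumrB -scaler_sumr -zwE -zvE hav scalerDr.
  by rewrite addrC addrA addrNK addrC.
move=> i iP.
have key : forall A B : vec, dot ((A - zw) - s *: u) ((w - zw) - s *: u) =
   dot (A - zw) (w - zw) - s * dot (A - zw) u - s * dot u (w - zw) + s * s * dot u u.
  move=> A B; rewrite !dotBl !dotBr !dotZl !dotZr; ring.
have -> : a i - (zw + s *: u) = (a i - zw) - s *: u by rewrite opprD addrA.
have -> : w - (zw + s *: u) = (w - zw) - s *: u by rewrite opprD addrA.
rewrite (key _ u) hs.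
have [->|iv] := eqVneq i v.
  rewrite hav dotBl dotDl G2 -hs.
  rewrite (dotBl (zv + u)) dotDl -G1 hs; ring.
have iP' : i \in P' by rewrite in_setD1 iv.
rewrite Fw // dotBl F2 // G1; ring.
Qed.

Lemma minnorm_exists (P : {set 'I_n}) v : v \in P -> exists C, minnorm P C.
Proof.
move=> vP; have : #|P| = (#|P|.-1).+1 by rewrite prednK // card_gt0; apply/set0Pn; exists v.
move=> /proj_exists /(_ 0) [z [hz h]]; exists z; split => // i /h.
rewrite sub0r dotNr dotBl => /eqP; rewrite oppr_eq0 subr_eq0 => /eqP. done.
Qed.

End A.

Definition pb (P : Prop) : bool :=
  if excluded_middle_informative P then true else false.
Lemma pbP (P : Prop) : pb P <-> P.
Proof. by rewrite /pb; case: excluded_middle_informative. Qed.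

Section B.
Variables (R : rcfType) (d n : nat) (a : 'I_n -> 'rV[R]_d.+1).
Hypothesis ha : forall i, vnorm (a i) = 1.
Local Notation vec := 'rV[R]_d.+1.
Local Notation dot := (@dot R d).
Local Notation minnorm := (minnorm a).

Lemma dot_aa i : dot (a i) (a i) = 1.
Proof. by rewrite -(sqr_sqrtr (dot_ge0 (a i))) -/(vnorm _) ha expr1n. Qed.

Lemma vnorm_gt0 x : 0 < dot x x -> 0 < vnorm x.
Proof. by rewrite /vnorm sqrtr_gt0. Qed.

Lemma vnorm_sq x : vnorm x ^+ 2 = dot x x.
Proof. by rewrite /vnorm sqr_sqrtr // dot_ge0. Qed.

Lemma dot_normalize w x : dot w (normalize x) = (vnorm x)^-1 * dot w x.
Proof. by rewrite /normalize dotZr. Qed.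

Lemma vnorm_normalize x : 0 < dot x x -> vnorm (normalize x) = 1.
Proof.
move=> hx; have hv := vnorm_gt0 hx.
rewrite {1}/vnorm /normalize dotZl dotZr -vnorm_sq.
have -> : (vnorm x)^-1 * ((vnorm x)^-1 * vnorm x ^+ 2) = 1.
  by field; rewrite lt0r_neq0.
by rewrite sqrtr1.
Qed.

Lemma minnorm_touch P C : minnorm P C -> touching_center a P C.
Proof.
move=> [hC h]; split => //; exists (Num.sqrt (1 - dot C C)) => i iP.
by rewrite /vnorm dot_sub dot_aa h //; congr Num.sqrt; ring.
Qed.

Lemma touch_minnorm P C : touching_center a P C -> minnorm P C.
Proof.
move=> [hC [rho h]]; split => //.
have E : forall i, i \in P -> dot (a i) C = (1 + dot C C - rho ^+ 2) / 2.
  move=> i /h; move/(congr1 (fun r => r ^+ 2)); rewrite vnorm_sq dot_sub dot_aa.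
  by move=> <-; field.
have EC := dot_aff hC E.
by move=> i /E ->; rewrite -EC.
Qed.


Definition Inv2 (x : vec) (Q : {set 'I_n}) := [/\ affinely_independent a Q, in_conv a Q x,
  (forall i, i \in Q -> dot (a i) x = dot x x) & 0 < dot x x].

Record Inv4 (x : vec) (Q0 Q : {set 'I_n}) (m : 'I_n) (y : vec) : Prop := {
  i4_ind : affinely_independent a (m |: Q0);
  i4_mQ : m \notin Q0;
  i4_sub : Q \subset Q0;
  i4_x : forall i, i \in Q0 -> dot (a i) x = dot x x;
  i4_xpos : 0 < dot x x;
  i4_m : dot (a m) x < 0;
  i4_nconv : ~ in_conv a (m |: Q0) 0;
  i4_y : in_conv a (m |: Q) y;
  i4_yx : y = x \/ dot y y < dot x x }.

Lemma center_lt x Q0 Q m y C : Inv4 x Q0 Q m y -> minnorm (m |: Q) C ->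
  dot C C < dot x x.
Proof.
move=> I hC; have yaff := conv_aff (i4_y I).
have e1 := minnorm_dot hC yaff.
have h1 := dot_ge0 (y - C); rewrite dot_sub e1 in h1.
case: (i4_yx I) => [yx|]; last by move=> h; lra.
subst y; rewrite lt_neqAle; apply/andP; split; last by lra.
apply/eqP => E.
have xC : x = C.
  apply/eqP; rewrite -subr_eq0; apply/eqP; apply: dot_eq0.
  by rewrite dot_sub e1 E; ring.
have := (proj2 hC) m (setU11 _ _); rewrite -xC => hm.
have := i4_m I; have := i4_xpos I; lra.
Qed.

Lemma center_coef x Q0 Q m y C (e : 'I_n -> R) : Inv4 x Q0 Q m y ->
  minnorm (m |: Q) C -> \sum_(i in m |: Q) e i = 1 ->
  C = \sum_(i in m |: Q) e i *: a i -> 0 < e m.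
Proof.
move=> I hC e1 eC.
have lt := center_lt I hC.
have mQ : m \notin Q.
  by apply/negP => /(subsetP (i4_sub I)); apply/negP; exact: (i4_mQ I).
have Ex : dot C x = e m * dot (a m) x + (1 - e m) * dot x x.
  rewrite eC dot_suml big_setU1 //= dotZl.
  rewrite (eq_bigr (fun i => e i * dot x x)); last first.
    by move=> i iQ; rewrite dotZl (i4_x I) // (subsetP (i4_sub I)).
  by rewrite -mulr_suml; move: e1; rewrite big_setU1 //= => <-; ring.
have h := dot_ge0 (C - x); rewrite dot_sub in h.
have := i4_m I; have := i4_xpos I.
rewrite Ex in h => h1 h2; nra.
Qed.


Lemma inv_start j0 : Inv2 (a j0) [set j0].
Proof.
split.
- move=> c; rewrite !big_set1 => c0 _ i; rewrite inE => /eqP -> //.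
- by exists (fun _ => 1); rewrite !big_set1 scale1r; split => // i _; apply: ler01.
- by move=> i; rewrite inE => /eqP ->.
- by rewrite dot_aa ltr01.
Qed.

Lemma minnorm_of_inv2 x Q : Inv2 x Q -> minnorm Q x.
Proof. by case=> _ /conv_aff h hx _; split. Qed.

Lemma violated x m : 0 < dot x x -> ~ feasible a (normalize x) ->
  most_violated a (normalize x) m -> dot (a m) x < 0.
Proof.
move=> hx hf hm.
have [i hi] : exists i, dot (a i) (normalize x) < 0.
  apply: NNPP => hn; apply: hf => i; rewrite leNgt; apply/negP => hi.
  by apply: hn; exists i.
have := le_lt_trans (hm i) hi; rewrite dot_normalize pmulr_rlt0 //.
by rewrite invr_gt0 vnorm_gt0.
Qed.

Lemma inv_2_4 x Q m : Inv2 x Q -> ~ feasible a (normalize x) ->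
  most_violated a (normalize x) m -> ~ positively_spanning a (m |: Q) ->
  Inv4 x Q Q m x.
Proof.
move=> [hind hconv hdot hpos] hf hm hps.
have hmx := violated hpos hf hm.
have mQ : m \notin Q.
  by apply/negP => mQ'; have := hdot m mQ'; lra.
have hind' : affinely_independent a (m |: Q).
  move=> c; rewrite !big_setU1 //= => c0 ca.
  have cm : c m = 0.
    have := congr1 (fun v => dot v x) ca; rewrite /= dot0l dotDl dotZl dot_suml.
    rewrite (eq_bigr (fun i => c i * dot x x)); last by move=> i /hdot <-; rewrite dotZl.
    rewrite -mulr_suml.
    have -> : \sum_(i in Q) c i = - c m by apply/eqP; rewrite -addr_eq0 addrC c0.
    move=> h; have : c m * (dot (a m) x - dot x x) = 0 by rewrite -h; ring.
    move/eqP; rewrite mulf_eq0 => /orP [/eqP //|]; rewrite subr_eq0 => /eqP E.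
    by move: hmx hpos; rewrite E; lra.
  move: c0 ca; rewrite cm scale0r !add0r => c0 ca i.
  rewrite in_setU1 => /orP [/eqP -> //|]; exact: hind.
constructor => //.
- by move=> h0; apply: hps; split.
- by apply: in_conv_sub hconv; apply: subsetU1.
- by left.
Qed.

Lemma inv_4_2 x Q0 Q m y C : Inv4 x Q0 Q m y -> touching_center a (m |: Q) C ->
  in_conv a (m |: Q) C -> Inv2 C (m |: Q) /\ dot C C < dot x x.
Proof.
move=> I hT hc; have hC := touch_minnorm hT.
split; last exact: center_lt I hC.
have sub : m |: Q \subset m |: Q0 by apply: setUS; exact: (i4_sub I).
split => //; first exact: aff_indep_sub sub (i4_ind I).
  by case: hC.
rewrite lt0r dot_ge0 andbT; apply/eqP => /dot_eq0 C0.
by apply: (i4_nconv I); apply: in_conv_sub sub _; rewrite -C0.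
Qed.


Lemma inv_4_4 x Q0 Q m y C y' F j : Inv4 x Q0 Q m y ->
  touching_center a (m |: Q) C -> segment_exit a (m |: Q) y C y' ->
  simplex_facet (m |: Q) F -> in_conv a F y' -> j \in Q -> j \notin F ->
  Inv4 x Q0 (Q :\ j) m y'.
Proof.
move=> I hT [t [/andP [t0 t1] [y'E _]]] [v vP FE] hF jQ jF.
have hC := touch_minnorm hT.
have jv : j = v.
  apply/eqP; apply: contraNT jF => jv; rewrite FE in_setD1 jv /=.
  exact: setU1r.
have jm : j != m.
  apply/negP => /eqP jm; have := i4_mQ I; rewrite -jm => /negP; apply.
  exact: (subsetP (i4_sub I)) _ jQ.
have FE' : F = m |: (Q :\ j).
  rewrite FE -jv; apply/setP => i; rewrite !in_setD1 !in_setU1.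
  rewrite in_setD1.
  have [->|im] := eqVneq i m; last by [].
  by rewrite eq_sym jm.
constructor; try exact: (i4_ind I); try exact: (i4_mQ I); try exact: (i4_x I);
  try exact: (i4_xpos I); try exact: (i4_m I); try exact: (i4_nconv I).
- by apply: subset_trans (i4_sub I); apply: subsetDl.
- by rewrite -FE'.
have K := center_lt I hC.
have yC := minnorm_dot hC (conv_aff (i4_y I)).
have [t0'|tpos] := eqVneq t 0.
  by rewrite y'E t0' scale0r addr0; exact: (i4_yx I).
right.
have tp : 0 < t by rewrite lt_neqAle eq_sym tpos t0.
have Yx : dot y y <= dot x x.
  by case: (i4_yx I) => [->|]; [rewrite lexx|move/ltW].
have E : dot y' y' = dot y y - (2 * t - t ^+ 2) * (dot y y - dot C C).
  rewrite y'E !dotDl !dotDr !dotZl !dotZr !dotBl !dotBr (dotC C y) yC; ring.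
rewrite E.
have h1 : 0 < 2 * t - t ^+ 2 by nra.
have h2 : 2 * t - t ^+ 2 <= 1 by nra.
nra.
Qed.


Lemma fin_argmin (P : {pred 'I_n}) (F : 'I_n -> R) i0 : P i0 ->
  exists j, P j /\ forall i, P i -> F j <= F i.
Proof. by move=> Pi0; case: (arg_minP F Pi0) => j Pj hj; exists j. Qed.

Lemma progress2 x Q : Inv2 x Q -> exists t, alg_step a (AtStep2 x Q) t.
Proof.
move=> [hind hconv hdot hpos].
have [hf|hf] := classic (feasible a (normalize x)).
  by eexists; apply: step2_stop.
have [i hi] : exists i, dot (a i) (normalize x) < 0.
  apply: NNPP => hn; apply: hf => i; rewrite leNgt; apply/negP => hi.
  by apply: hn; exists i.
have [m [_ hm]] := @fin_argmin xpredT (fun j => dot (a j) (normalize x)) i isT.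
have hm' : most_violated a (normalize x) m by move=> j; apply: hm.
have [hps|hps] := classic (positively_spanning a (m |: Q)).
  by eexists; apply: step3_stop.
by eexists; apply: step3_continue.
Qed.


Lemma comb_line (P : {set 'I_n}) (c e : 'I_n -> R) y C s :
  \sum_(i in P) c i = 1 -> y = \sum_(i in P) c i *: a i ->
  \sum_(i in P) e i = 1 -> C = \sum_(i in P) e i *: a i ->
  \sum_(i in P) (c i + s * (e i - c i)) = 1 /\
  \sum_(i in P) (c i + s * (e i - c i)) *: a i = y + s *: (C - y).
Proof.
move=> c1 cy e1 eC; split.
  by rewrite big_split /= -mulr_sumr sumrB c1 e1 subrr mulr0 addr0.
rewrite (eq_bigr (fun i => c i *: a i + s *: (e i *: a i - c i *: a i))).
  by rewrite big_split /= -scaler_sumr sumrB -cy -eC.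
by move=> i _; rewrite scalerDl scalerBr !scalerA mulrBr scalerBl.
Qed.

Lemma vnorm_scale (k : R) (v : vec) : 0 <= k -> vnorm (k *: v) = k * vnorm v.
Proof.
move=> k0; rewrite /vnorm dotZl dotZr mulrA sqrtrM ?mulr_ge0 //.
by rewrite -expr2 sqrtr_sqr ger0_norm.
Qed.

Lemma progress4 x Q0 Q m y : Inv4 x Q0 Q m y ->
  exists t, alg_step a (AtStep4 Q m y) t.
Proof.
move=> I; set P := m |: Q.
have [C hC] := minnorm_exists a (setU11 m Q).
have hT := minnorm_touch hC.
have [hc|hc] := classic (in_conv a P C).
  by eexists; apply: step5 hT hc.
have hind : affinely_independent a P.
  by apply: aff_indep_sub (i4_ind I); apply: setUS; exact: (i4_sub I).
have [[e [e1 eC]] _] := hC.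
have em := center_coef I hC e1 eC.
have [c [c0 [c1 cy]]] := i4_y I.
have [i0 [i0P ei0]] : exists i, i \in P /\ e i < 0.
  apply: NNPP => hn; apply: hc; exists e; split => // i iP.
  rewrite leNgt; apply/negP => ei; apply: hn; exists i; by split.
have [j [/andP [jP ej] hj]] := @fin_argmin (fun i => (i \in P) && (e i < 0))
   (fun i => c i / (c i - e i)) i0 (introT andP (conj i0P ei0)).
set t := c j / (c j - e j).
have cej : 0 < c j - e j by have := c0 j jP; lra.
have t0 : 0 <= t by rewrite /t divr_ge0 ?c0 // ltW.
have t1 : t <= 1 by rewrite /t ler_pdivrMr // mul1r; lra.
pose f i := c i + t * (e i - c i).
have [f1 fy] := comb_line t c1 cy e1 eC.
have fnn : forall i, i \in P -> 0 <= f i.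
  move=> i iP; rewrite /f; have ci := c0 i iP.
  have [ei|ei] := ltP (e i) 0.
    have := hj i; rewrite iP ei => /(_ isT).
    rewrite ler_pdivlMr; last by lra.
    move=> h; rewrite -/t in h.
    have -> : c i + t * (e i - c i) = c i - t * (c i - e i) by ring.
    lra.
  nra.
have fj : f j = 0 by rewrite /f /t; field; rewrite lt0r_neq0.
have beyond : forall s, t < s -> ~ in_conv a P (y + s *: (C - y)).
  move=> s ts; have [g1 gy] := comb_line s c1 cy e1 eC.
  apply: (not_conv hind g1 (esym gy) jP).
  move: fj; rewrite /f => fj; nra.
have jm : j != m by apply/eqP => jm; move: ej; rewrite jm; lra.
have jQ : j \in Q by move: jP; rewrite in_setU1 (negbTE jm).
set y' := y + t *: (C - y).
have cy' : in_conv a P y' by exists f; split => //; split => //; rewrite fy.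
eexists; apply: (@step6 _ _ _ _ Q m y C y' (P :\ j) j hT hc) => //.
- exists t; split; first by rewrite t0 t1.
  split => //; split.
    split => // -[_ [eps [eps0 H]]].
    pose V := vnorm (C - y).
    have V0 : 0 <= V by apply: sqrtr_ge0.
    pose dl := eps / (V + 1).
    have dl0 : 0 < dl by rewrite /dl divr_gt0 //; lra.
    apply: (beyond (t + dl)); first lra.
    apply: H.
      have [g1 gy] := comb_line (t + dl) c1 cy e1 eC.
      by exists (fun i => c i + (t + dl) * (e i - c i)).
    have -> : y + (t + dl) *: (C - y) - y' = dl *: (C - y).
      by rewrite /y'; apply/rowP => k; rewrite !mxE; ring.
    rewrite vnorm_scale ?ltW // -/V /dl mulrAC ltr_pdivrMr; last by lra.
    nra.
  by move=> s /andP [ts _] [hs _]; apply: (beyond s ts).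
- by exists j.
- exists f; split; first by move=> i; rewrite in_setD1 => /andP [_ /fnn].
  split.
    by move: f1 fj; rewrite (big_setD1 j jP) /f /= => f1 fj; rewrite fj add0r in f1.
  by rewrite /y' -fy (big_setD1 j jP) /=; move: fj; rewrite /f => ->; rewrite scale0r add0r.
- by rewrite setD11.
Qed.


Definition Inv (s : alg_state R d n) : Prop :=
  match s with
  | AtStep2 x Q => Inv2 x Q
  | AtStep4 Q m y => exists x Q0, Inv4 x Q0 Q m y
  | Stop2 x => 0 < dot x x /\ feasible a (normalize x)
  | Stop3 Q => positively_spanning a Q
  end.

Lemma inv_step s t : Inv s -> alg_step a s t -> Inv t.
Proof.
move=> hs st; case: st hs => /=.
- by move=> x Q hf [].
- by [].
- by move=> x Q m hf hm hps hI; exists x, Q; apply: inv_2_4.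
- by move=> Q m y C hT hc [x [Q0 I]]; case: (inv_4_2 I hT hc).
- move=> Q m y C y' F j hT hc hse hfa hF jQ jF [x [Q0 I]].
  by exists x, Q0; apply: inv_4_4 I hT hse hfa hF jQ jF.
Qed.

Lemma acc_stop2 x : Acc (fun t s => alg_step a s t) (Stop2 x).
Proof. by constructor => t st; inversion st. Qed.
Lemma acc_stop3 Q : Acc (fun t s => alg_step a s t) (Stop3 Q).
Proof. by constructor => t st; inversion st. Qed.

Lemma acc4 x (H : forall x' Q', Inv2 x' Q' -> dot x' x' < dot x x ->
     Acc (fun t s => alg_step a s t) (AtStep2 x' Q')) :
  forall k (Q0 Q : {set 'I_n}) m y, (#|Q| < k)%N -> Inv4 x Q0 Q m y ->
  Acc (fun t s => alg_step a s t) (AtStep4 Q m y).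
Proof.
move=> k; induction k as [|k IH]; move=> Q0 Q m y hk I.
  by rewrite ltn0 in hk.
constructor => t st.
inversion st.
  by case: (inv_4_2 I H4 H5) => I2 lt; apply: H.
apply: (IH Q0 (Q :\ j) m y').
  move: hk; rewrite (cardsD1 j Q) H9 add1n ltnS; exact.
exact: inv_4_4 I H3 H5 H6 H7 H9 H10.
Qed.

Definition M (x : vec) := #|[set P : {set 'I_n} |
   pb (exists z, minnorm P z /\ dot z z < dot x x)]|.

Lemma M_lt x x' Q' : Inv2 x' Q' -> dot x' x' < dot x x -> (M x' < M x)%N.
Proof.
move=> I lt; apply: proper_card; rewrite properE; apply/andP; split.
  apply/subsetP => P; rewrite !inE => /pbP [z [hz hzx]]; apply/pbP.
  by exists z; split => //; apply: lt_trans hzx lt.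
have hQ : Q' \in [set P : {set 'I_n} | pb (exists z, minnorm P z /\ dot z z < dot x x)].
  by rewrite inE; apply/pbP; exists x'; split => //; exact: minnorm_of_inv2.
apply/negP => /subsetP /(_ Q' hQ); rewrite inE => /pbP [z [hz hzx]].
have zx := minnorm_uniq hz (minnorm_of_inv2 I).
by move: hzx; rewrite zx ltxx.
Qed.

Lemma acc2 N : forall x Q, (M x < N)%N -> Inv2 x Q ->
  Acc (fun t s => alg_step a s t) (AtStep2 x Q).
Proof.
elim: N => [|N IH] x Q hN I.
  by rewrite ltn0 in hN.
constructor => t st; inversion st.
- exact: acc_stop2.
- exact: acc_stop3.
- apply: (@acc4 x _ (#|Q|.+1) Q Q m x (ltnSn _)).
    move=> x' Q' I' lt; apply: (IH x' Q') => //.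
    apply: leq_trans (M_lt I' lt) _; rewrite -ltnS; exact: hN.
  exact: inv_2_4 I H1 H2 H4.
Qed.

Lemma inv_rt s1 s2 : clos_refl_trans _ (alg_step a) s1 s2 -> Inv s1 -> Inv s2.
Proof.
elim => [u v st|u|u v w _ IH1 _ IH2] //; first by move=> h; apply: inv_step h st.
by move=> h; apply: IH2; apply: IH1.
Qed.

End B.

Theorem lemma2p8 (R : rcfType) (d n : nat) (a : 'I_n -> 'rV[R]_d.+1)
  (ha : forall i, vnorm (a i) = 1) (j0 : 'I_n) :
  (* every run from the start state is finite *)
  Acc (fun t s => alg_step a s t) (AtStep2 (a j0) [set j0]) /\
  (* every reachable state can continue, or is a stop of the required kind *)
  (forall s, clos_refl_trans _ (alg_step a) (AtStep2 (a j0) [set j0]) s ->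
     (exists t, alg_step a s t) \/
     (exists x, s = Stop2 x /\ vnorm (normalize x) = 1 /\
                (forall i, 0 <= dot (a i) x)) \/
     (exists Q, s = Stop3 Q /\ positively_spanning a Q)).
Proof.
split.
  exact: (acc2 ha (ltnSn (M a (a j0))) (inv_start ha j0)).
move=> s hs; have := inv_rt ha hs (inv_start ha j0).
case: s {hs} => /=.
- by move=> x Q I; left; apply: progress2 I.
- by move=> Q m y [x [Q0 I]]; left; apply: progress4 I.
- move=> x [hpos hf]; right; left; exists x; split => //; split.
    exact: vnorm_normalize.
  move=> i; have := hf i; rewrite dot_normalize pmulr_rge0 //.
  by rewrite invr_gt0 vnorm_gt0.
- by move=> Q hQ; right; right; exists Q.
Qed.
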